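(* Let $f:M\to\mathbb{R}^3$ be an immersion of a surface with an eq\''uiaffine transversal vector field $\xi$ and positive definite induced bilinear form $h$, let $(u,v)$ be local isothermal coordinates with $h(\partial_u,\partial_u)=h(\partial_v,\partial_v)=\rho$, $h(\partial_u,\partial_v)=0$, and let $\nu$ be the co-normal ($\nu\cdot f_u=\nu\cdot f_v=0$, $\nu\cdot\xi=1$). Let $(b_{ij})$ be the matrix of the shape operator in these coordinates, i.e. $\xi_u=-b_{11}f_u-b_{21}f_v$, $\xi_v=-b_{12}f_u-b_{22}f_v$. Then $$\begin{pmatrix} b_{11}&b_{12}\\ b_{21}&b_{22}\end{pmatrix}=-\frac{1}{\delta}\begin{pmatrix}\nu_{uu}\cdot\xi & \nu_{uv}\cdot\xi\\ \nu_{uv}\cdot\xi & \nu_{vv}\cdot\xi\end{pmatrix},\qquad \delta=\frac{[f_u,f_v,\xi]\,[\nu,\nu_u,\nu_v]}{\rho}.$$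
   Context: $D$ denotes the flat connection of $\mathbb{R}^3$; $h$, the shape operator $B$ and the $1$-form $\tau$ are defined by $D_Xf_*Y=f_*(\nabla_XY)+h(X,Y)\xi$ and $D_X\xi=-f_*(BX)+\tau(X)\xi$; $\xi$ is eq\''uiaffine if $\tau=0$. $\cdot$ is the Euclidean inner product, $[a,b,c]$ the determinant of three vectors, subscripts denote partial derivatives. *)

(* Defs.v *)
From HB Require Import structures.
From mathcomp Require Import all_boot all_order all_algebra.
From mathcomp Require Import all_classical all_reals all_analysis.
Set Implicit Arguments. Unset Strict Implicit. Unset Printing Implicit Defensive.
Import Order.TTheory GRing.Theory Num.Theory.
Import numFieldNormedType.Exports.
Local Open Scope classical_set_scope.
Local Open Scope ring_scope.

Section Defs.
Variable R : realType.
Local Notation V3 := 'rV[R]_3.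

Definition dot (a b : V3) : R := \sum_(i < 3) a 0 i * b 0 i.

Definition det3 (a b c : V3) : R :=
  \det (\matrix_(i < 3, j < 3)
          (if val i == 0%N then a 0 j else if val i == 1%N then b 0 j else c 0 j)).

Definition pu (F : R -> R -> V3) : R -> R -> V3 :=
  fun u v => derive1 (fun s => F s v) u.
Definition pv (F : R -> R -> V3) : R -> R -> V3 :=
  fun u v => derive1 (fun t => F u t) v.

Definition dpart (s : seq bool) (F : R -> R -> V3) : R -> R -> V3 :=
  foldr (fun b G => if b then pv G else pu G) F s.

Definition smooth_on (U : set (R * R)) (F : R -> R -> V3) : Prop :=
  forall (s : seq bool) (p : R * R), U p ->
    [/\ derivable (fun x => dpart s F x p.2) p.1 1,
        derivable (fun y => dpart s F p.1 y) p.2 1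
      & {for p, continuous (fun q : R * R => dpart s F q.1 q.2)}].
End Defs.

(* Main.v *)
Require Import Defs.
From HB Require Import structures.
From mathcomp Require Import all_boot all_order all_algebra.
From mathcomp Require Import all_classical all_reals all_analysis.
From mathcomp Require Import ring lra.
Import Order.TTheory GRing.Theory Num.Theory.
Import numFieldNormedType.Exports.
Local Open Scope classical_set_scope.
Local Open Scope ring_scope.

Section S.
Variable R : realType.
Local Notation V3 := 'rV[R]_3.

Lemma dotE (a b : V3) : dot a b = a 0 0 * b 0 0 + a 0 1 * b 0 1 + a 0 2%:R * b 0 2%:R.
Proof. rewrite /dot !big_ord_recr big_ord0 /= add0r. by congr (_ + _ + _); congr (_ * _); congr (_ _ _); apply/val_inj. Qed.

Lemma dotC (a b : V3) : dot a b = dot b a.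
Proof. by rewrite !dotE; ring. Qed.
Lemma dotDr (a b c : V3) : dot a (b + c) = dot a b + dot a c.
Proof. rewrite !dotE !mxE; ring. Qed.
Lemma dotZr (a : V3) k (b : V3) : dot a (k *: b) = k * dot a b.
Proof. rewrite !dotE !mxE; ring. Qed.
Lemma dotNr (a b : V3) : dot a (- b) = - dot a b.
Proof. rewrite !dotE !mxE; ring. Qed.

Definition M3 (a b c : V3) : 'M[R]_3 := \matrix_(i < 3, j < 3)
          (if val i == 0%N then a 0 j else if val i == 1%N then b 0 j else c 0 j).

Lemma det33 (M : 'M[R]_3) : \det M =
  M 0 0 * (M 1 1 * M 2%:R 2%:R - M 1 2%:R * M 2%:R 1)
  - M 0 1 * (M 1 0 * M 2%:R 2%:R - M 1 2%:R * M 2%:R 0)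
  + M 0 2%:R * (M 1 0 * M 2%:R 1 - M 1 1 * M 2%:R 0).
Proof.
pose m (i j : nat) := M (inord i) (inord j).
have hM : M = \matrix_(i, j) m i j by apply/matrixP => i j; rewrite mxE /m !inord_val.
rewrite hM (expand_det_row _ 0) !big_ord_recr big_ord0 /= /cofactor.
rewrite !(expand_det_row _ 0) !big_ord_recr !big_ord0 /= /cofactor.
rewrite !det_mx11 !mxE /=.
rewrite !expr0 !expr1 ?exprS; ring.
Qed.

Definition sel (a b c : V3) (i : 'I_3) : V3 :=
  if val i == 0%N then a else if val i == 1%N then b else c.

Lemma det3_sel (a b c : V3) : det3 a b c = \det (\matrix_(i, j) sel a b c i 0 j).
Proof. by rewrite /det3; congr (\det _); apply/matrixP => i j; rewrite !mxE /sel; case: ifP => //; case: ifP. Qed.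

Lemma det3_mul (a b c d e g : V3) : det3 a b c * det3 d e g =
  dot a d * (dot b e * dot c g - dot b g * dot c e)
  - dot a e * (dot b d * dot c g - dot b g * dot c d)
  + dot a g * (dot b d * dot c e - dot b e * dot c d).
Proof.
rewrite !det3_sel -[X in _ * X]det_tr -det_mulmx.
have -> : (\matrix_(i, j) sel a b c i 0 j) *m (\matrix_(i, j) sel d e g i 0 j)^T
   = \matrix_(i, j) dot (sel a b c i) (sel d e g j).
  by apply/matrixP => i j; rewrite !mxE /dot; apply: eq_bigr => k _; rewrite !mxE.
by rewrite det33 !mxE.
Qed.

Lemma comp_der (a : R -> V3) x (i : 'I_3) : derivable a x 1 ->
  derivable (fun s => a s 0 i) x 1 /\ derive1 (fun s => a s 0 i) x = (derive1 a x) 0 i.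
Proof.
move=> da; split; first by move/derivable_mxP: da; apply.
by rewrite !derive1E derive_mx // mxE.
Qed.

Lemma dot_der (a b : R -> V3) x : derivable a x 1 -> derivable b x 1 ->
  derivable (fun s => dot (a s) (b s)) x 1 /\
  derive1 (fun s => dot (a s) (b s)) x = dot (derive1 a x) (b x) + dot (a x) (derive1 b x).
Proof.
move=> da db.
have [da0 Da0] := comp_der _ _ (0) da; have [da1 Da1] := comp_der _ _ (1) da; have [da2 Da2] := comp_der _ _ (2%:R) da.
have [db0 Db0] := comp_der _ _ (0) db; have [db1 Db1] := comp_der _ _ (1) db; have [db2 Db2] := comp_der _ _ (2%:R) db.
have -> : (fun s => dot (a s) (b s)) = 
  ((fun s => a s 0 0) * (fun s => b s 0 0) + (fun s => a s 0 1) * (fun s => b s 0 1))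
   + (fun s => a s 0 2%:R) * (fun s => b s 0 2%:R).
  by apply/funext => s; rewrite dotE.
have d0 := derivableM da0 db0; have d1 := derivableM da1 db1; have d2 := derivableM da2 db2.
have d01 := derivableD d0 d1.
split; first exact: (derivableD d01 d2).
rewrite derive1E (deriveD d01 d2) (deriveD d0 d1) (deriveM da0 db0) (deriveM da1 db1) (deriveM da2 db2).
rewrite -!derive1E Da0 Da1 Da2 Db0 Db1 Db2 !dotE /=.
rewrite /GRing.scale/=. ring.
Qed.


Lemma der_loc_cst (g : R -> R) x c : (\forall s \near x, g s = c) -> derive1 g x = 0.
Proof.
move=> hg; rewrite derive1E (@near_eq_derive _ _ _ g (cst c)) ?derive_cst //.
Qed.

Lemma box (P : set (R * R)) (u v : R) : nbhs (u, v) P ->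
  exists2 e : R, 0 < e & forall s t, `|s - u| < e -> `|t - v| < e -> P (s, t).
Proof.
move=> /nbhs_ballP [e e0 he]; exists e => // s t hs ht; apply: he.
by split; rewrite /ball /= distrC.
Qed.

Lemma near_u (P : set (R * R)) (u v : R) : nbhs (u, v) P -> \forall s \near u, P (s, v).
Proof.
move=> /box [e e0 he]; apply/nbhs_ballP; exists e => // s hs.
by apply: he; [rewrite distrC; move: hs; rewrite /ball /= | rewrite subrr normr0].
Qed.

Lemma near_v (P : set (R * R)) (u v : R) : nbhs (u, v) P -> \forall t \near v, P (u, t).
Proof.
move=> /box [e e0 he]; apply/nbhs_ballP; exists e => // t ht.
by apply: he; [rewrite subrr normr0 | rewrite distrC; move: ht; rewrite /ball /=].
Qed.

Lemma open_nb (U : set (R * R)) p : open U -> U p -> nbhs p U.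
Proof. by move=> oU Up; apply: open_nbhs_nbhs. Qed.

Lemma mvt (g : R -> R) a b : a < b -> (forall x, a <= x <= b -> derivable g x 1) ->
  exists2 c, a <= c <= b & g b - g a = derive1 g c * (b - a).
Proof.
move=> ab dg.
have hd : forall x, x \in `]a, b[%R -> is_derive x 1 g (derive1 g x).
  move=> x xab; rewrite derive1E; apply: derivableP; apply: dg.
  by move: xab; rewrite in_itv /= => /andP[/ltW -> /ltW ->].
have hc : {within `[a, b], continuous g}.
  apply: continuous_in_subspaceT => x xab.
  apply: differentiable_continuous; apply/derivable1_diffP; apply: dg.
  by move: xab; rewrite inE /= in_itv.
have [c cab ->] := MVT ab hd hc.
by exists c => //; move: cab; rewrite in_itv /= => /andP[/ltW -> /ltW ->].
Qed.

Lemma mvt2 (G G1 G12 : R -> R -> R) u v h : 0 < h ->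
  (forall s t, u <= s <= u + h -> v <= t <= v + h ->
     derivable (fun s => G s t) s 1 /\ derive1 (fun s => G s t) s = G1 s t) ->
  (forall s t, u <= s <= u + h -> v <= t <= v + h ->
     derivable (fun t => G1 s t) t 1 /\ derive1 (fun t => G1 s t) t = G12 s t) ->
  exists c d, [/\ u <= c <= u + h, v <= d <= v + h &
     G (u + h) (v + h) - G (u + h) v - G u (v + h) + G u v = G12 c d * (h * h)].
Proof.
move=> h0 H1 H2.
have uh : u < u + h by rewrite ltrDl.
have vh : v < v + h by rewrite ltrDl.
have vv : v <= v <= v + h by rewrite lexx ltW.
have vhv : v <= v + h <= v + h by rewrite lexx ltW.
have [c cb hc] := mvt (fun s => G s (v + h) - G s v) _ _ uh
  (fun x hx => derivableB (proj1 (H1 x _ hx vhv)) (proj1 (H1 x _ hx vv))).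
have [d db hd] := mvt (fun t => G1 c t) _ _ vh (fun y hy => proj1 (H2 c y cb hy)).
exists c, d; split => //.
have -> : G (u + h) (v + h) - G (u + h) v - G u (v + h) + G u v
  = (G (u + h) (v + h) - G (u + h) v) - (G u (v + h) - G u v) by ring.
rewrite hc.
rewrite derive1E deriveB; [|exact: (proj1 (H1 c _ cb vhv))|exact: (proj1 (H1 c _ cb vv))].
rewrite -!derive1E (proj2 (H1 c _ cb vhv)) (proj2 (H1 c _ cb vv)) hd (proj2 (H2 c d cb db)).
have -> : u + h - u = h by ring.
have -> : v + h - v = h by ring.
ring.
Qed.

Lemma entry_le (M : V3) i : `|M 0 i| <= `|M|.
Proof.
rewrite [leRHS]/Num.Def.normr/= mx_normrE.
by apply: le_trans; last exact: (le_bigmax _ _ (0, i)).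
Qed.

Lemma cont_entry (G : R * R -> V3) p i e : 0 < e -> {for p, continuous G} ->
  nbhs p [set q | `|G q 0 i - G p 0 i| < e].
Proof.
move=> e0 /cvgrPdist_lt /(_ e e0); apply: filterS => q hq /=.
have := entry_le (G p - G q) i; rewrite !mxE => hle.
by rewrite distrC; apply: le_lt_trans hle hq.
Qed.

Lemma schwarz (U : set (R * R)) (F : R -> R -> V3) u v :
  open U -> smooth_on U F -> U (u, v) -> pu (pv F) u v = pv (pu F) u v.
Proof.
move=> oU sF Uuv; apply/rowP => i.
pose A := pu (pv F) u v 0 i; pose B := pv (pu F) u v 0 i.
change (A = B).
have [//|nAB] := eqVneq A B.
exfalso.
pose e := `|A - B| / 2.
have e0 : 0 < e by rewrite divr_gt0 ?normr_gt0 ?subr_eq0.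
have [_ _ cA] := sF [:: false; true] (u, v) Uuv.
have [_ _ cB] := sF [:: true; false] (u, v) Uuv.
have nA := cont_entry _ _ i _ e0 cA.
have nB := cont_entry _ _ i _ e0 cB.
have nU := open_nb _ _ oU Uuv.
have [d d0 hd] := box _ _ _ (filterI nU (filterI nA nB)).
set h := d / 2.
have h0 : 0 < h by rewrite divr_gt0.
have hd' : h < d by rewrite /h ltr_pdivrMr // ltr_pMr // ltr1n.
have inb : forall s x, x <= s <= x + h -> `|s - x| < d.
  move=> s x /andP[h1 h2]; rewrite ger0_norm ?subr_ge0 //.
  by apply: (le_lt_trans _ hd'); lra.
have HU : forall s t, u <= s <= u + h -> v <= t <= v + h -> U (s, t).
  by move=> s t hs ht; have [] := hd s t (inb _ _ hs) (inb _ _ ht).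
have H1 : forall s t, u <= s <= u + h -> v <= t <= v + h ->
     derivable (fun s => F s t 0 i) s 1 /\ derive1 (fun s => F s t 0 i) s = pu F s t 0 i.
  move=> s t hs ht; have [p _ _] := sF [::] (s, t) (HU s t hs ht).
  exact: (comp_der _ _ i p).
have H2 : forall s t, u <= s <= u + h -> v <= t <= v + h ->
     derivable (fun t => pu F s t 0 i) t 1 /\ derive1 (fun t => pu F s t 0 i) t = pv (pu F) s t 0 i.
  move=> s t hs ht; have [_ p _] := sF [:: false] (s, t) (HU s t hs ht).
  exact: (comp_der _ _ i p).
have H3 : forall t s, v <= t <= v + h -> u <= s <= u + h ->
     derivable (fun t => F s t 0 i) t 1 /\ derive1 (fun t => F s t 0 i) t = pv F s t 0 i.
  move=> t s ht hs; have [_ p _] := sF [::] (s, t) (HU s t hs ht).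
  exact: (comp_der _ _ i p).
have H4 : forall t s, v <= t <= v + h -> u <= s <= u + h ->
     derivable (fun s => pv F s t 0 i) s 1 /\ derive1 (fun s => pv F s t 0 i) s = pu (pv F) s t 0 i.
  move=> t s ht hs; have [p _ _] := sF [:: true] (s, t) (HU s t hs ht).
  exact: (comp_der _ _ i p).
have [c [d1 [cb db eq1]]] := mvt2 (fun s t => F s t 0 i) (fun s t => pu F s t 0 i)
   (fun s t => pv (pu F) s t 0 i) u v h h0 H1 H2.
have [c2 [d2 [cb2 db2 eq2]]] := mvt2 (fun t s => F s t 0 i) (fun t s => pv F s t 0 i)
   (fun t s => pu (pv F) s t 0 i) v u h h0 H3 H4.
have hh : h * h != 0 by apply: lt0r_neq0; apply: mulr_gt0.
pose X : R := pv (pu F) c d1 0 i; pose Y : R := pu (pv F) d2 c2 0 i.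
pose f1 : R := F (u + h) (v + h) 0 i; pose f2 : R := F (u + h) v 0 i; pose f3 : R := F u (v + h) 0 i; pose f4 : R := F u v 0 i.
have e3 : X * (h * h) = Y * (h * h).
  have E1 : f1 - f2 - f3 + f4 = X * (h * h) by exact: eq1.
  have E2 : f1 - f3 - f2 + f4 = Y * (h * h) by exact: eq2.
  clear -E1 E2; clearbody X Y f1 f2 f3 f4; rewrite -E1 -E2; ring.
have eqXY : X = Y := mulIf hh e3.
have [_ [bA _]] := hd d2 c2 (inb _ _ db2) (inb _ _ cb2).
have [_ [_ bB]] := hd c d1 (inb _ _ cb) (inb _ _ db).
have bA' : `|Y - A| < e by exact: bA.
have bB' : `|X - B| < e by exact: bB.
have he : `|A - B| = e * 2 by rewrite /e divfK // pnatr_eq0.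
clear -eqXY bA' bB' he; clearbody X Y A B e.
have tri := ler_normD (A - X) (X - B).
have E : A - X + (X - B) = A - B by ring.
rewrite E he in tri; rewrite -eqXY distrC in bA'.
lra.
Qed.

Lemma smooth_pu (U : set (R * R)) G : smooth_on U G -> smooth_on U (pu G).
Proof.
move=> sG s p Up; have := sG (s ++ [:: false]) p Up.
by rewrite /dpart foldr_cat.
Qed.

Lemma smooth_pv (U : set (R * R)) G : smooth_on U G -> smooth_on U (pv G).
Proof.
move=> sG s p Up; have := sG (s ++ [:: true]) p Up.
by rewrite /dpart foldr_cat.
Qed.

Lemma dot_du (U : set (R * R)) (a b : R -> R -> V3) c u v :
  open U -> smooth_on U a -> smooth_on U b ->
  (forall s t, U (s, t) -> dot (a s t) (b s t) = c) -> U (u, v) ->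
  dot (pu a u v) (b u v) + dot (a u v) (pu b u v) = 0.
Proof.
move=> oU sa sb hc Uuv.
have [da _ _] := sa [::] (u, v) Uuv.
have [db _ _] := sb [::] (u, v) Uuv.
have [_ <-] := dot_der _ _ _ da db.
apply: (der_loc_cst _ _ c).
have := near_u _ _ _ (open_nb _ _ oU Uuv).
by apply: filterS => s /hc.
Qed.

Lemma dot_dv (U : set (R * R)) (a b : R -> R -> V3) c u v :
  open U -> smooth_on U a -> smooth_on U b ->
  (forall s t, U (s, t) -> dot (a s t) (b s t) = c) -> U (u, v) ->
  dot (pv a u v) (b u v) + dot (a u v) (pv b u v) = 0.
Proof.
move=> oU sa sb hc Uuv.
have [_ da _] := sa [::] (u, v) Uuv.
have [_ db _] := sb [::] (u, v) Uuv.
have [_ <-] := dot_der _ _ _ da db.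
apply: (der_loc_cst _ _ c).
have := near_v _ _ _ (open_nb _ _ oU Uuv).
by apply: filterS => t /hc.
Qed.
End S.

Section Alg.
Context {R : realType}.
Local Notation V3 := 'rV[R]_3.

Lemma L3 {n a b x : V3} (c1 c2 r : R) : dot n a = 0 -> dot n b = 0 -> dot n x = 1 ->
  dot n (c1 *: a + c2 *: b + r *: x) = r.
Proof. by move=> h1 h2 h3; rewrite !dotDr !dotZr h1 h2 h3; ring. Qed.

Lemma L2v {n a b : V3} (k1 k2 : R) {s1 s2 : R} : dot n a = s1 -> dot n b = s2 ->
  dot n (- (k1 *: a) - k2 *: b) = - (k1 * s1) - k2 * s2.
Proof. by move=> h1 h2; rewrite !dotDr !dotNr !dotZr h1 h2. Qed.

Lemma S1 {x y r : R} : x + y = 0 -> y = r -> x = - r.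
Proof. by move=> H E; rewrite -E; apply/eqP; rewrite -addr_eq0 H. Qed.

Lemma S0 {x y : R} : x + y = 0 -> y = 0 -> x = 0.
Proof. by move=> H E; move: H; rewrite E addr0. Qed.

Lemma K1 {x y b b' r : R} : r != 0 -> x + y = 0 -> y = - (b * - r) - b' * 0 ->
  b = - r^-1 * x.
Proof. by move=> r0 H E; rewrite (S1 H E); field. Qed.

Lemma K2 {x y b b' r : R} : r != 0 -> x + y = 0 -> y = - (b * 0) - b' * - r ->
  b' = - r^-1 * x.
Proof. by move=> r0 H E; rewrite (S1 H E); field. Qed.

Lemma Dl {x y r : R} : r != 0 -> x * y = r * r -> x * y / r = r.
Proof. by move=> r0 ->; rewrite mulrK // unitfE. Qed.

Lemma detv {a b c d e g : V3} {r : R} :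
  dot d a = 0 -> dot e a = - r -> dot g a = 0 ->
  dot d b = 0 -> dot e b = 0 -> dot g b = - r ->
  dot d c = 1 -> dot e c = 0 -> dot g c = 0 ->
  det3 a b c * det3 d e g = r * r.
Proof.
move=> h1 h2 h3 h4 h5 h6 h7 h8 h9.
rewrite det3_mul !(@dotC _ a) !(@dotC _ b) !(@dotC _ c) h1 h2 h3 h4 h5 h6 h7 h8 h9; ring.
Qed.
End Alg.

Theorem lemma3p2 (R : realType) (U : set (R * R))
    (f xi nu : R -> R -> 'rV[R]_3) (rho b11 b12 b21 b22 : R -> R -> R) :
  open U ->
  smooth_on U f -> smooth_on U xi -> smooth_on U nu ->
  (* xi is transversal to f (so f is an immersion) *)
  (forall u v, U (u, v) -> det3 (pu f u v) (pv f u v) (xi u v) != 0) ->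
  (* Gauss formula D_X f_* Y = f_*(nabla_X Y) + h(X,Y) xi, with h positive
     definite and (u,v) isothermal: h11 = h22 = rho > 0, h12 = 0 *)
  (forall u v, U (u, v) -> 0 < rho u v) ->
  (forall u v, U (u, v) -> exists c1 c2 : R,
     pu (pu f) u v = c1 *: pu f u v + c2 *: pv f u v + rho u v *: xi u v) ->
  (forall u v, U (u, v) -> exists c1 c2 : R,
     pv (pu f) u v = c1 *: pu f u v + c2 *: pv f u v + 0 *: xi u v) ->
  (forall u v, U (u, v) -> exists c1 c2 : R,
     pv (pv f) u v = c1 *: pu f u v + c2 *: pv f u v + rho u v *: xi u v) ->
  (* xi equiaffine (tau = 0), with shape operator matrix (b_ij) *)
  (forall u v, U (u, v) ->
     pu xi u v = - (b11 u v *: pu f u v) - b21 u v *: pv f u v) ->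
  (forall u v, U (u, v) ->
     pv xi u v = - (b12 u v *: pu f u v) - b22 u v *: pv f u v) ->
  (* nu is the co-normal *)
  (forall u v, U (u, v) ->
     [/\ dot (nu u v) (pu f u v) = 0, dot (nu u v) (pv f u v) = 0
       & dot (nu u v) (xi u v) = 1]) ->
  forall u v, U (u, v) ->
    let delta := det3 (pu f u v) (pv f u v) (xi u v)
                 * det3 (nu u v) (pu nu u v) (pv nu u v) / rho u v in
    [/\ b11 u v = - delta^-1 * dot (pu (pu nu) u v) (xi u v),
        b12 u v = - delta^-1 * dot (pv (pu nu) u v) (xi u v),
        b21 u v = - delta^-1 * dot (pv (pu nu) u v) (xi u v)
      & b22 u v = - delta^-1 * dot (pv (pv nu) u v) (xi u v)].
Proof.
move=> oU sf sxi snu hdet hrho G11 G12 G22 W1 W2 CN u v Uuv delta.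
have sfu := smooth_pu _ _ _ sf; have sfv := smooth_pv _ _ _ sf.
have snuu := smooth_pu _ _ _ snu; have snuv := smooth_pv _ _ _ snu.
have rho0 : rho u v != 0 by apply: lt0r_neq0; apply: hrho.
have [N1 N2 N3] := CN u v Uuv.
have F1 : dot (pu nu u v) (pu f u v) = - rho u v.
  have H := dot_du _ _ _ _ 0 _ _ oU snu sfu (fun s t H => let: And3 p _ _ := CN s t H in p) Uuv.
  have [c1 [c2 E]] := G11 u v Uuv; rewrite E in H.
  exact: (S1 H (L3 c1 c2 (rho u v) N1 N2 N3)).
have F2 : dot (pv nu u v) (pu f u v) = 0.
  have H := dot_dv _ _ _ _ 0 _ _ oU snu sfu (fun s t H => let: And3 p _ _ := CN s t H in p) Uuv.
  have [c1 [c2 E]] := G12 u v Uuv; rewrite E in H.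
  exact: (S0 H (L3 c1 c2 0 N1 N2 N3)).
have F3 : dot (pu nu u v) (pv f u v) = 0.
  have H := dot_du _ _ _ _ 0 _ _ oU snu sfv (fun s t H => let: And3 _ p _ := CN s t H in p) Uuv.
  rewrite (schwarz _ _ _ _ _ oU sf Uuv) in H.
  have [c1 [c2 E]] := G12 u v Uuv; rewrite E in H.
  exact: (S0 H (L3 c1 c2 0 N1 N2 N3)).
have F4 : dot (pv nu u v) (pv f u v) = - rho u v.
  have H := dot_dv _ _ _ _ 0 _ _ oU snu sfv (fun s t H => let: And3 _ p _ := CN s t H in p) Uuv.
  have [c1 [c2 E]] := G22 u v Uuv; rewrite E in H.
  exact: (S1 H (L3 c1 c2 (rho u v) N1 N2 N3)).
have Q5 : forall s t, U (s, t) -> dot (pu nu s t) (xi s t) = 0.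
  move=> s t Ust; have [M1 M2 M3] := CN s t Ust.
  have H := dot_du _ _ _ _ 1 _ _ oU snu sxi (fun s t H => let: And3 _ _ p := CN s t H in p) Ust.
  rewrite (W1 s t Ust) in H.
  apply: (S0 H); rewrite (L2v (b11 s t) (b21 s t) M1 M2); ring.
have Q6 : forall s t, U (s, t) -> dot (pv nu s t) (xi s t) = 0.
  move=> s t Ust; have [M1 M2 M3] := CN s t Ust.
  have H := dot_dv _ _ _ _ 1 _ _ oU snu sxi (fun s t H => let: And3 _ _ p := CN s t H in p) Ust.
  rewrite (W2 s t Ust) in H.
  apply: (S0 H); rewrite (L2v (b12 s t) (b22 s t) M1 M2); ring.
have Hd : delta = rho u v.
  exact: (Dl rho0 (detv N1 F1 F2 N2 F3 F4 N3 (Q5 u v Uuv) (Q6 u v Uuv))).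
rewrite Hd.
have H7 := dot_du _ _ _ _ 0 _ _ oU snuu sxi Q5 Uuv; rewrite (W1 u v Uuv) in H7.
have H8 := dot_dv _ _ _ _ 0 _ _ oU snuu sxi Q5 Uuv; rewrite (W2 u v Uuv) in H8.
have H9 := dot_du _ _ _ _ 0 _ _ oU snuv sxi Q6 Uuv; rewrite (W1 u v Uuv) in H9.
rewrite (schwarz _ _ _ _ _ oU snu Uuv) in H9.
have H10 := dot_dv _ _ _ _ 0 _ _ oU snuv sxi Q6 Uuv; rewrite (W2 u v Uuv) in H10.
split.
- exact: (K1 rho0 H7 (L2v (b11 u v) (b21 u v) F1 F3)).
- exact: (K1 rho0 H8 (L2v (b12 u v) (b22 u v) F1 F3)).
- exact: (K2 rho0 H9 (L2v (b11 u v) (b21 u v) F2 F4)).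
- exact: (K2 rho0 H10 (L2v (b12 u v) (b22 u v) F2 F4)).
Qed.
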